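(* Let $G=(V,E)$ be a graph and let $\alpha$ be the cardinality of a maximum independent set of $G$. For any edge weight $w$ and vertex measure $\mu$ on $G$, $$\alpha\le\min_{\sigma}\#\{k: L_k(\Gamma^\sigma)=0\},$$ where the minimum is over all signatures $\sigma:E\to\{+1,-1\}$ and $\Gamma^\sigma=(G,\sigma)$ (with the given $w$ and $\mu$).
   Context: $G=(V,E)$ is a finite undirected graph without self-loops, $V=\{1,\dots,n\}$. A signed graph $(G,\sigma)$ has signature $\sigma:E\to\{\pm1\}$, edge weight $w:E\to(0,\infty)$, vertex measure $\mu:V\to(0,\infty)$, potential $\kappa:V\to\mathbb R$. For $p\ge1$ and nonzero $f$, $\mathcal R_p^\sigma(f)=\frac{\sum_{\{i,j\}\in E}w_{ij}|f(i)-\sigma_{ij}f(j)|^p+\sum_i\kappa_i|f(i)|^p}{\sum_i\mu_i|f(i)|^p}$; $\mathcal S_p=\{f:\sum_i\mu_i|f(i)|^p=1\}$; Krasnoselskii genus $\gamma(B)$ of closed symmetric $B\subset\mathbb R^n\setminus\{0\}$: least $k$ with an odd continuous map $B\to\mathbb R^k\setminus\{0\}$; $\mathcal F_k(\mathcal S_p)$ = closed symmetric $B\subset\mathcal S_p$ with $\gamma(B)\ge k$; $\lambda_k^{(p)}=\min_{B\in\mathcal F_k(\mathcal S_p)}\max_{f\in B}\mathcal R_p^\sigma(f)$. Cut-off adjacency eigenvalues: $L_k(\Gamma):=\lim_{p\to\infty}2^{-p}\lambda_k^{(p)}(\Gamma)$, $k=1,\dots,n$ (limits exist, are nonnegative and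 independent of $\kappa$). *)

(* Defs.v *)
From HB Require Import structures.
From mathcomp Require Import all_boot all_order all_algebra.
From mathcomp Require Import all_classical all_reals all_analysis.
Set Implicit Arguments. Unset Strict Implicit. Unset Printing Implicit Defensive.
Import Order.TTheory GRing.Theory Num.Theory.
Import numFieldNormedType.Exports.
Local Open Scope classical_set_scope.
Local Open Scope ring_scope.

(* Vertices are 'I_n (i.e. {0,...,n-1} standing for {1,...,n}); the graph is a
   symmetric irreflexive relation e; each undirected edge {i,j} is counted once,
   as the ordered pair (i,j) with i < j.  A signature is encoded by a boolean
   function on pairs: sg (i,j) = true means sigma_ij = -1, false means +1
   (only the values on edges (i,j), i<j, matter). *)

Definition sgnb (R : realType) (b : bool) : R := if b then -1 else 1.

Definition rq_num (R : realType) (n : nat) (e : rel 'I_n)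
  (w : 'I_n -> 'I_n -> R) (sg : {ffun 'I_n * 'I_n -> bool})
  (kappa : 'I_n -> R) (p : R) (f : 'rV[R]_n) : R :=
  \sum_(i : 'I_n) \sum_(j : 'I_n | (i < j)%N && e i j)
      w i j * `|f 0 i - sgnb R (sg (i, j)) * f 0 j| `^ p
  + \sum_(i : 'I_n) kappa i * `|f 0 i| `^ p.

Definition rq_den (R : realType) (n : nat) (mu : 'I_n -> R) (p : R)
  (f : 'rV[R]_n) : R :=
  \sum_(i : 'I_n) mu i * `|f 0 i| `^ p.

Definition rayleigh (R : realType) (n : nat) (e : rel 'I_n)
  (w : 'I_n -> 'I_n -> R) (sg : {ffun 'I_n * 'I_n -> bool})
  (kappa mu : 'I_n -> R) (p : R) (f : 'rV[R]_n) : R :=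
  rq_num e w sg kappa p f / rq_den mu p f.

Definition Sp (R : realType) (n : nat) (mu : 'I_n -> R) (p : R) : set 'rV[R]_n :=
  [set f | rq_den mu p f = 1].

Definition symmetric_set (R : realType) (n : nat) (B : set 'rV[R]_n) : Prop :=
  forall f, B f -> B (- f).

(* Krasnoselskii genus: gamma(B) >= k, i.e. for no j < k is there an odd
   continuous map B -> R^j \ {0}  (so gamma(B) = least such j, +infinity if none,
   and gamma(empty) = 0). *)
Definition genus_ge (R : realType) (n : nat) (B : set 'rV[R]_n) (k : nat) : Prop :=
  forall j : nat, (j < k)%N ->
    ~ (exists g : 'rV[R]_n -> 'rV[R]_j,
         {within B, continuous g} /\
         (forall x, B x -> g (- x) = - g x) /\
         (forall x, B x -> g x != 0)).

Definition Fk (R : realType) (n : nat) (mu : 'I_n -> R) (p : R) (k : nat)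
  : set (set 'rV[R]_n) :=
  [set B | [/\ B `<=` Sp mu p, closed B, symmetric_set B & genus_ge B k]].

(* lambda_k^(p) = min_{B in F_k} max_{f in B} R_p(f)  (min/max are attained;
   written as inf/sup) *)
Definition lambda_p (R : realType) (n : nat) (e : rel 'I_n)
  (w : 'I_n -> 'I_n -> R) (sg : {ffun 'I_n * 'I_n -> bool})
  (kappa mu : 'I_n -> R) (k : nat) (p : R) : R :=
  inf [set sup [set rayleigh e w sg kappa mu p f | f in B] | B in Fk mu p k].

Definition Lk (R : realType) (n : nat) (e : rel 'I_n)
  (w : 'I_n -> 'I_n -> R) (sg : {ffun 'I_n * 'I_n -> bool})
  (kappa mu : 'I_n -> R) (k : nat) : R :=
  lim ((2 `^ (- p) * lambda_p e w sg kappa mu k p) @[p --> +oo]).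

Definition num_zero_Lk (R : realType) (n : nat) (e : rel 'I_n)
  (w : 'I_n -> 'I_n -> R) (sg : {ffun 'I_n * 'I_n -> bool})
  (kappa mu : 'I_n -> R) : nat :=
  #|[set k : 'I_n | Lk e w sg kappa mu k.+1 == 0]|.

Definition independent (n : nat) (e : rel 'I_n) (S : {set 'I_n}) : bool :=
  [forall i in S, forall j in S, ~~ e i j].

Definition indep_number (n : nat) (e : rel 'I_n) : nat :=
  \max_(S : {set 'I_n} | independent e S) #|S|.

(* Main.v *)
Require Import Defs.
From HB Require Import structures.
From mathcomp Require Import all_boot all_order all_algebra.
From mathcomp Require Import all_classical all_reals all_analysis.
Import Order.TTheory GRing.Theory Num.Theory.
Local Open Scope ring_scope.

Section Helpers.
Set Implicit Arguments. Unset Strict Implicit. Unset Printing Implicit Defensive.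
Import numFieldNormedType.Exports.
Local Open Scope classical_set_scope.
Lemma cont_powabs (R : realType) (p : R) : 0 < p ->
  continuous (fun y : R => `|y| `^ p).
Proof.
move=> p0 y.
have [->|y0] := eqVneq y 0.
  rewrite /continuous_at normr0 powR0 ?gt_eqF//.
  apply/cvgrPdist_lt => e e0.
  have e1 : 0 < e `^ p^-1 by rewrite powR_gt0.
  have := @cvgrPdist_lt _ R^o _ (nbhs (0:R)) _ id 0.
  move=> [+ _] => /(_ (cvg_id)) /(_ _ e1).
  apply: filterS => z; rewrite sub0r normrN => zl.
  rewrite sub0r normrN ger0_norm ?powR_ge0//.
  have -> : e = (e `^ p^-1) `^ p by rewrite -powRrM mulVf ?gt_eqF// powRr1 // ltW.
  by apply: (gt0_ltr_powR p0); rewrite ?inE ?nnegrE ?powR_ge0//.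
have ny : 0 < `|y| by rewrite normr_gt0.
apply: (@continuous_comp _ _ _ (fun y : R => `|y|) (fun a => a `^ p)).
  exact: norm_continuous.
apply/differentiable_continuous/derivable1_diffP.
apply: derivable_powR; by rewrite in_itv /= ny.
Qed.
Lemma cont_entries (R : realType) (T : topologicalType) (m k : nat)
  (F : T -> 'M[R]_(m,k)) (x : T) :
  (forall i j, {for x, continuous (fun y => F y i j)}) -> {for x, continuous F}.
Proof.
move=> H; apply/cvgrPdist_lt => e e0.
have : \forall y \near x, forall ij : 'I_m * 'I_k,
   `|F x ij.1 ij.2 - F y ij.1 ij.2| < e.
  apply: filter_forall => -[i j].
  by have /cvgrPdist_lt := H i j; apply.
apply: filterS => y Hy.
rewrite [X in X < _]/Num.norm /= mx_normrE.
apply: bigmax_lt => // ij _; by rewrite !mxE.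
Qed.
Lemma cont_sum (R : realType) (T : topologicalType) (I : finType) (P : pred I)
  (F : I -> T -> R) (x : T) :
  (forall i, {for x, continuous (F i)}) ->
  {for x, continuous (fun y => \sum_(i | P i) F i y)}.
Proof.
move=> H; rewrite /prop_for /continuous_at.
elim: (index_enum I) => [|a s IH].
  under eq_fun do rewrite big_nil. rewrite big_nil; exact: cvg_cst.
under eq_fun do rewrite big_cons. rewrite big_cons.
case: (P a) => //.
exact: (cvgD (H a) IH).
Qed.
Lemma cont_den (R : realType) (n : nat) (mu : 'I_n -> R) (p : R) : 0 < p ->
  continuous (rq_den mu p).
Proof.
move=> p0 x; rewrite /rq_den.
have H := @cont_sum R 'rV[R]_n 'I_n (fun _ => true) (fun i y => mu i * `|y 0 i| `^ p) x. apply: H => i.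
have c1 : {for x, continuous (fun y : 'rV[R]_n => `|y 0 i| `^ p)}.
  apply: (@continuous_comp _ _ _ (fun y : 'rV[R]_n => y 0 i) (fun a : R => `|a| `^ p)); first exact: coord_continuous. exact: cont_powabs.
exact: (@cvgMl_tmp R _ (nbhs x) _ (fun y : 'rV[R]_n => `|y 0 i| `^ p) (mu i) _ c1).
Qed.


Lemma two_pow_cvg (R : realType) : (2 : R) `^ (- p) @[p --> +oo] --> 0.
Proof.
have -> : (fun p : R => 2 `^ (- p)) = (fun x => expR (- x)) \o (fun p => p * ln 2).
  apply/funext => p /=; by rewrite /powR pnatr_eq0 /= mulNr.
apply: cvg_comp; last exact: cvgr_expR.
apply: gt0_cvgMly; first by rewrite ln_gt0 // ltr1n.
exact: cvg_id.
Qed.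

Lemma lim_bound0 (R : realType) (lam : R -> R) (M : R) :
  (\forall p \near +oo, `|lam p| <= M) ->
  lim ((2 `^ (- p) * lam p) @[p --> +oo]) = 0.
Proof.
move=> HM; apply: cvg_lim.
  exact: norm_hausdorff.
apply/cvgrPdist_lt => e e0.
have M1 : 0 < `|M| + 1 by rewrite ltr_wpDl.
have := @two_pow_cvg R; move/cvgrPdist_lt => /(_ (e / (`|M| + 1))).
rewrite divr_gt0 // => /(_ isT) H2.
near=> p.
rewrite sub0r normrN normrM ger0_norm ?powR_ge0 //.
have h1 : `|2 `^ (- p)| < e / (`|M| + 1).
  by rewrite -normrN -sub0r; near: p; exact: H2.
have h2 : `|lam p| <= `|M| + 1.
  have : `|lam p| <= M by near: p; exact: HM.
  move=> h; apply: (le_trans h); apply: (le_trans (ler_norm M)); by rewrite lerDl.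
rewrite ger0_norm ?powR_ge0 // in h1.
have -> : e = e / (`|M| + 1) * (`|M| + 1) by rewrite divfK // gt_eqF.
apply: (le_lt_trans (ler_wpM2l (powR_ge0 _ _) h2)).
by rewrite ltr_pM2r.
Unshelve. all: by end_near.
Qed.

Definition X0 (R : realType) (n : nat) : set 'rV[R]_n := [set x | x != 0].
Arguments X0 : clear implicits.

Lemma genus_sub (R : realType) (n : nat) (A B : set 'rV[R]_n) k :
  A `<=` B -> genus_ge A k -> genus_ge B k.
Proof.
move=> AB gA j jk [g [c [od nz]]]; apply: (gA j jk); exists g; split.
  exact: continuous_subspaceW AB c.
split => x Ax; [exact: od (AB _ Ax) | exact: nz (AB _ Ax)].
Qed.

Lemma rq_den0 (R : realType) (n : nat) (mu : 'I_n -> R) (p : R) :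
  p != 0 -> rq_den mu p 0 = 0.
Proof.
move=> p0; rewrite /rq_den big1 // => i _; by rewrite mxE normr0 powR0 // mulr0.
Qed.

Lemma Sp_X0 (R : realType) (n : nat) (mu : 'I_n -> R) (p : R) :
  p != 0 -> Sp mu p `<=` X0 R n.
Proof.
move=> p0 x; rewrite /Sp /X0 /=; apply: contra_eqN => /eqP ->.
by rewrite rq_den0 // eq_sym oner_eq0.
Qed.

Lemma Fk_X0 (R : realType) (n : nat) (mu : 'I_n -> R) (p : R) k B :
  p != 0 -> Fk mu p k B -> genus_ge (X0 R n) k.
Proof.
move=> p0 [BS _ _ gB]; apply: genus_sub gB.
by move=> x Bx; apply: (Sp_X0 p0); exact: BS.
Qed.

Lemma Lk_zero1 (R : realType) (n : nat) (e : rel 'I_n)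
  (w : 'I_n -> 'I_n -> R) (sg : {ffun 'I_n * 'I_n -> bool})
  (kappa mu : 'I_n -> R) (k : nat) :
  ~ genus_ge (X0 R n) k -> Lk e w sg kappa mu k = 0.
Proof.
move=> ng; rewrite /Lk; apply: cvg_lim; first exact: norm_hausdorff.
apply: cvg_near_cst.
near=> p.
have p0 : p != 0.
  apply: lt0r_neq0; near: p; apply: nbhs_pinfty_gt; exact: num_real.
rewrite /lambda_p.
have -> : [set sup [set rayleigh e w sg kappa mu p f | f in B] | B in Fk mu p k] = set0.
  apply/seteqP; split => // x [B FB _]; exfalso; apply: ng; exact: Fk_X0 FB.
by rewrite inf0 mulr0.
Unshelve. all: by end_near.
Qed.


Lemma term_le (R : realType) (n : nat) (mu : 'I_n -> R) (p : R) (f : 'rV[R]_n) i :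
  (forall i, 0 < mu i) -> rq_den mu p f = 1 -> `|f 0 i| `^ p <= (mu i)^-1.
Proof.
move=> mu0 H.
rewrite -[X in _ <= X]mulr1 ler_pdivlMl //.
rewrite -H /rq_den (bigD1 i) //= lerDl sumr_ge0 // => l _.
by rewrite mulr_ge0 ?powR_ge0 // ltW.
Qed.

Lemma sgnb_norm (R : realType) b : `|sgnb R b| = 1.
Proof. by case: b; rewrite /sgnb ?normrN normr1. Qed.

Definition Dk (R : realType) (n : nat) (kappa mu : 'I_n -> R) : R :=
  \sum_i `|kappa i| / mu i.

Definition Ck (R : realType) (n : nat) (e : rel 'I_n) (w : 'I_n -> 'I_n -> R)
  (mu : 'I_n -> R) : R :=
  \sum_(i : 'I_n) \sum_(j : 'I_n | (i < j)%N && e i j) w i j * ((mu i)^-1 + (mu j)^-1).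

Lemma kappa_lb (R : realType) (n : nat) (kappa mu : 'I_n -> R) (p : R) (f : 'rV[R]_n) :
  (forall i, 0 < mu i) -> rq_den mu p f = 1 ->
  - Dk kappa mu <= \sum_i kappa i * `|f 0 i| `^ p <= Dk kappa mu.
Proof.
move=> mu0 H.
have h i : `|kappa i * `|f 0 i| `^ p| <= `|kappa i| / mu i.
  rewrite normrM (ger0_norm (powR_ge0 _ _)).
  by apply: ler_wpM2l => //; apply: term_le.
rewrite -ler_norml /Dk.
apply: (le_trans (ler_norm_sum _ _ _)).
by apply: ler_sum => i _.
Qed.

Lemma num_lb (R : realType) (n : nat) (e : rel 'I_n) (w : 'I_n -> 'I_n -> R)
  (sg : {ffun 'I_n * 'I_n -> bool}) (kappa mu : 'I_n -> R) (p : R) (f : 'rV[R]_n) :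
  (forall i j, e i j -> 0 < w i j) -> (forall i, 0 < mu i) -> rq_den mu p f = 1 ->
  - Dk kappa mu <= rq_num e w sg kappa p f.
Proof.
move=> w0 mu0 H; rewrite /rq_num.
have /andP[h _] := kappa_lb kappa mu0 H.
apply: (le_trans h); rewrite lerDr.
apply: sumr_ge0 => i _; apply: sumr_ge0 => j /andP[_ eij].
by rewrite mulr_ge0 ?powR_ge0 // ltW // w0.
Qed.

Lemma num_ub_S (R : realType) (n : nat) (e : rel 'I_n) (w : 'I_n -> 'I_n -> R)
  (sg : {ffun 'I_n * 'I_n -> bool}) (kappa mu : 'I_n -> R) (p : R) (f : 'rV[R]_n)
  (S : {set 'I_n}) :
  0 < p -> independent e S ->
  (forall i j, e i j -> 0 < w i j) -> (forall i, 0 < mu i) -> rq_den mu p f = 1 ->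
  (forall i, i \notin S -> f 0 i = 0) ->
  rq_num e w sg kappa p f <= Ck e w mu + Dk kappa mu.
Proof.
move=> p0 indS w0 mu0 H HS; rewrite /rq_num.
have /andP[_ h] := kappa_lb kappa mu0 H.
apply: lerD => //.
apply: ler_sum => i _; apply: ler_sum => j /andP[_ eij].
apply: ler_wpM2l; first exact/ltW/w0.
have key : `|f 0 i - sgnb R (sg (i, j)) * f 0 j| `^ p <= `|f 0 i| `^ p + `|f 0 j| `^ p.
  have [iS|iS] := boolP (i \in S); last first.
    rewrite (HS i iS) sub0r normrN normrM sgnb_norm mul1r lerDr.
    by rewrite normr0 powR0 ?gt_eqF.
  have [jS|jS] := boolP (j \in S).
    by move/forallP: indS => /(_ i) /implyP /(_ iS) /forallP /(_ j) /implyP /(_ jS); rewrite eij.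
  by rewrite (HS j jS) mulr0 subr0 lerDl powR_ge0.
apply: (le_trans key); apply: lerD; exact: term_le.
Qed.

Definition BS (R : realType) (n : nat) (mu : 'I_n -> R) (p : R) (S : {set 'I_n})
  : set 'rV[R]_n :=
  [set f | rq_den mu p f = 1 /\ forall i, i \notin S -> f 0 i = 0].
Arguments BS : clear implicits.

Lemma den_opp (R : realType) (n : nat) (mu : 'I_n -> R) (p : R) f :
  rq_den mu p (- f) = rq_den mu p f.
Proof. by apply: eq_bigr => i _; rewrite mxE normrN. Qed.

Lemma BS_closed (R : realType) (n : nat) (mu : 'I_n -> R) (p : R) S :
  0 < p -> closed (BS R n mu p S).
Proof.
move=> p0.
pose pc (f : 'rV[R]_n) : 'rV[R]_n := \row_i (if i \in S then 0 else f 0 i).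
have -> : BS R n mu p S = (rq_den mu p @^-1` [set x | x = 1]) `&` (pc @^-1` [set x | x = 0]).
  apply/seteqP; split => f /=.
    move=> [h1 h2]; split => //; apply/rowP => i; rewrite !mxE.
    by case: ifPn => // /h2.
  move=> [h1 /rowP h2]; split => // i iS; have := h2 i; by rewrite !mxE (negbTE iS).
apply: closedI; apply: preimage_closed; try exact: closed_eq.
  move=> x _; exact: cont_den.
move=> x _; apply: cont_entries => i j.
have -> : (fun y : 'rV[R]_n => pc y i j) = (fun y : 'rV[R]_n => if j \in S then (0:R) else y 0 j).
  by apply/funext => y; rewrite !mxE.
case: (j \in S).
  exact: cst_continuous.
exact: coord_continuous.
have -> : [set x : 'rV[R]_n | x = 0] = [set 0] by [].
apply: accessible_closed_set1; apply: hausdorff_accessible; exact: norm_hausdorff.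
Qed.

Lemma genus_nonempty (R : realType) (n : nat) (B : set 'rV[R]_n) k :
  genus_ge B k -> (0 < k)%N -> B !=set0.
Proof.
move=> gB k0; apply/set0P/negP => /eqP B0.
apply: (gB 0%N k0); exists (fun _ => 0); rewrite B0; split.
  exact: continuous_subspace0.
by split.
Qed.

Lemma BS_Fk (R : realType) (n : nat) (mu : 'I_n -> R) (p : R) S k :
  0 < p -> genus_ge (BS R n mu p S) k -> Fk mu p k (BS R n mu p S).
Proof.
move=> p0 g; split => //.
- by move=> f [].
- exact: BS_closed.
- move=> f [h1 h2]; split; first by rewrite den_opp.
  by move=> i iS; rewrite mxE h2 // oppr0.
Qed.

Lemma rayleigh_Sp (R : realType) (n : nat) (e : rel 'I_n) (w : 'I_n -> 'I_n -> R)
  (sg : {ffun 'I_n * 'I_n -> bool}) (kappa mu : 'I_n -> R) (p : R) (f : 'rV[R]_n) :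
  rq_den mu p f = 1 -> rayleigh e w sg kappa mu p f = rq_num e w sg kappa p f.
Proof. by move=> H; rewrite /rayleigh H divr1. Qed.

Lemma lambda_bound (R : realType) (n : nat) (e : rel 'I_n) (w : 'I_n -> 'I_n -> R)
  (sg : {ffun 'I_n * 'I_n -> bool}) (kappa mu : 'I_n -> R) (p : R) (k : nat)
  (S : {set 'I_n}) :
  0 < p -> (0 < k)%N -> independent e S ->
  (forall i j, e i j -> 0 < w i j) -> (forall i, 0 < mu i) ->
  genus_ge (BS R n mu p S) k ->
  `|lambda_p e w sg kappa mu k p| <= Ck e w mu + Dk kappa mu.
Proof.
move=> p0 k0 indS w0 mu0 gS.
set E := [set sup [set rayleigh e w sg kappa mu p f | f in B] | B in Fk mu p k].
set C := Ck e w mu; set D := Dk kappa mu.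
have D0 : 0 <= D by apply: sumr_ge0 => i _; rewrite divr_ge0 // ltW.
have C0 : 0 <= C.
  apply: sumr_ge0 => i _; apply: sumr_ge0 => j /andP[_ eij].
  rewrite mulr_ge0 // ?addr_ge0 ?invr_ge0.
  - exact: ltW (w0 _ _ eij).
  - by [].
  - exact: ltW.
  - exact: ltW.
have FBS := BS_Fk p0 gS.
have [f0 Bf0] := genus_nonempty gS k0.
have supBS : sup [set rayleigh e w sg kappa mu p f | f in BS R n mu p S] <= C + D.
  apply: ge_sup; first by exists (rayleigh e w sg kappa mu p f0), f0.
  move=> _ [f [h1 h2] <-]; rewrite rayleigh_Sp //; apply: (num_ub_S _ _ p0 indS w0 mu0 h1 h2).
have lbE : lbound E (- D).
  move=> _ [B [BS _ _ gB] <-].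
  have [g Bg] := genus_nonempty gB k0.
  have [hs|hs] := pselect (has_sup [set rayleigh e w sg kappa mu p f | f in B]).
    apply: (@le_trans _ _ (rayleigh e w sg kappa mu p g)).
      rewrite rayleigh_Sp; last exact: BS.
      apply: num_lb => //; exact: BS.
    apply: ub_le_sup; first by case: hs.
    by exists g.
  by rewrite sup_out // lerNl oppr0.
have Ene : E !=set0.
  by exists (sup [set rayleigh e w sg kappa mu p f | f in BS R n mu p S]), (BS R n mu p S).
rewrite /lambda_p -/E ler_norml; apply/andP; split.
  apply: (@le_trans _ _ (- D)); first by rewrite lerN2 lerDr.
  exact: lb_le_inf.
apply: (le_trans _ supBS).
apply: ge_inf; first by exists (- D).
by exists (BS R n mu p S).
Qed.

Lemma Lk_zero2 (R : realType) (n : nat) (e : rel 'I_n)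
  (w : 'I_n -> 'I_n -> R) (sg : {ffun 'I_n * 'I_n -> bool})
  (kappa mu : 'I_n -> R) (k : nat) (S : {set 'I_n}) :
  (0 < k)%N -> independent e S ->
  (forall i j, e i j -> 0 < w i j) -> (forall i, 0 < mu i) ->
  (forall p, 0 < p -> genus_ge (BS R n mu p S) k) ->
  Lk e w sg kappa mu k = 0.
Proof.
move=> k0 indS w0 mu0 gS; rewrite /Lk.
apply: (@lim_bound0 _ _ (Ck e w mu + Dk kappa mu)).
near=> p.
have p0 : 0 < p by near: p; apply: nbhs_pinfty_gt; exact: num_real.
apply: (@lambda_bound R n e w sg kappa mu p k S) => //. exact: gS.
Unshelve. all: by end_near.
Qed.


Lemma comp_within {T U V : topologicalType} (h : T -> U) (g : U -> V) (B : set U) x :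
  {for x, continuous h} -> (\forall y \near x, B (h y)) -> B (h x) ->
  {within B, continuous g} -> {for x, continuous (g \o h)}.
Proof.
move=> ch nB Bh /subspace_continuousP gc.
apply: cvg_comp (gc _ Bh).
move=> P WP.
have := ch _ WP; rewrite /= !nbhs_simpl => Hp.
by apply: filterS2 Hp nB => y /= H1 H2; apply: H1.
Qed.

Lemma cont_row_mx (R : realType) (T : topologicalType) m1 m2
  (A : T -> 'rV[R]_m1) (B : T -> 'rV[R]_m2) x :
  {for x, continuous A} -> {for x, continuous B} ->
  {for x, continuous (fun y => row_mx (A y) (B y))}.
Proof.
move=> cA cB; apply: cont_entries => i t.
case: (split_ordP t) => t' ->.
  have -> : (fun y => row_mx (A y) (B y) i (lshift m2 t')) = (fun M : 'rV[R]_m1 => M i t') \o A.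
    by apply/funext => y; rewrite row_mxEl.
  apply: (@continuous_comp _ _ _ A (fun M : 'rV[R]_m1 => M i t')) => //; exact: coord_continuous.
have -> : (fun y => row_mx (A y) (B y) i (rshift m1 t')) = (fun M : 'rV[R]_m2 => M i t') \o B.
  by apply/funext => y; rewrite row_mxEr.
apply: (@continuous_comp _ _ _ B (fun M : 'rV[R]_m2 => M i t')) => //; exact: coord_continuous.
Qed.

Lemma powRV (R : realType) (a p : R) : 0 < a -> (a^-1) `^ p = (a `^ p)^-1.
Proof.
move=> a0; apply: (@mulIf _ (a `^ p)); first by rewrite gt_eqF // powR_gt0.
by rewrite -powRM ?invr_ge0 ?ltW // mulVf ?gt_eqF // powR1 mulVf // gt_eqF // powR_gt0.
Qed.

Lemma den_scale (R : realType) (n : nat) (mu : 'I_n -> R) (p : R) c f :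
  rq_den mu p (c *: f) = `|c| `^ p * rq_den mu p f.
Proof.
rewrite /rq_den mulr_sumr; apply: eq_bigr => i _.
by rewrite mxE normrM powRM // mulrCA.
Qed.

Lemma den_gt0 (R : realType) (n : nat) (mu : 'I_n -> R) (p : R) f :
  (forall i, 0 < mu i) -> f != 0 -> 0 < rq_den mu p f.
Proof.
move=> mu0 f0.
have [i fi] : exists i, f 0 i != 0.
  apply/existsP; apply: contraNT f0 => /existsPn H; apply/eqP/rowP => i.
  by rewrite mxE; apply/eqP; move: (H i); rewrite negbK.
rewrite /rq_den (bigD1 i) //=; apply: ltr_pwDl.
  by rewrite mulr_gt0 // powR_gt0 // normr_gt0.
by apply: sumr_ge0 => l _; rewrite mulr_ge0 ?powR_ge0 // ltW.
Qed.


Lemma gh_le1 (R : realType) j (v : 'rV[R]_j) : `| `|v|^-1 *: v| <= 1.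
Proof.
have [->|v0] := eqVneq v 0; first by rewrite scaler0 normr0.
by rewrite normrZ ger0_norm ?invr_ge0 // mulVf ?normr_eq0.
Qed.

Lemma genus_BS (R : realType) (n : nat) (mu : 'I_n -> R) (p : R) (S : {set 'I_n}) k :
  0 < p -> (forall i, 0 < mu i) ->
  genus_ge (X0 R n) (k + #|~: S|) -> genus_ge (BS R n mu p S) k.
Proof.
move=> p0 mu0 gX j jk [g [gc [godd gnz]]].
apply: (gX (j + #|~: S|)%N); first by rewrite ltn_add2r.
pose pS (x : 'rV[R]_n) : 'rV[R]_n := \row_i (if i \in S then x 0 i else 0).
pose N (y : 'rV[R]_n) : R := `|rq_den mu p y| `^ p^-1.
pose gh (v : 'rV[R]_j) : 'rV[R]_j := `|v|^-1 *: v.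
pose h (x : 'rV[R]_n) : 'rV[R]_n := (N (pS x))^-1 *: pS x.
pose F (x : 'rV[R]_n) : 'rV[R]_j := N (pS x) *: gh (g (h x)).
pose Q (x : 'rV[R]_n) : 'rV[R]_#|~: S| := \row_t x 0 (enum_val t).
exists (fun x => row_mx (F x) (Q x)).
have pi0 : 0 < p^-1 by rewrite invr_gt0.
have pSc : continuous pS.
  move=> x; apply: cont_entries => i l.
  have -> : (fun y : 'rV[R]_n => pS y i l) = (fun y : 'rV[R]_n => if l \in S then y 0 l else 0).
    by apply/funext => y; rewrite !mxE.
  case: (l \in S); [exact: coord_continuous | exact: cst_continuous].
have NpSc : forall x, {for x, continuous (fun y => N (pS y))}.
  move=> x.
  apply: (@continuous_comp _ _ _ pS N); first exact: pSc.
  apply: (@continuous_comp _ _ _ (rq_den mu p) (fun a : R => `|a| `^ p^-1)).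
    exact: cont_den.
  exact: cont_powabs.
have N0 : N 0 = 0 by rewrite /N rq_den0 ?gt_eqF // normr0 powR0 // gt_eqF.
have Npos : forall y, y != 0 -> 0 < N y.
  by move=> y y0; rewrite /N powR_gt0 // normr_gt0 gt_eqF // den_gt0.
have hBS : forall x, pS x != 0 -> BS R n mu p S (h x).
  move=> x nz; split.
    have D0 := den_gt0 p mu0 nz.
    rewrite den_scale /h /N ger0_norm ?invr_ge0 ?powR_ge0 //.
    rewrite powRV; last by rewrite powR_gt0 // normr_gt0 gt_eqF.
    rewrite -powRrM mulVf ?gt_eqF // powRr1 ?normr_ge0 // ger0_norm ?ltW //.
    by rewrite mulVf ?gt_eqF.
  by move=> i iS; rewrite /h !mxE (negbTE iS) mulr0.
have pSN : forall x, pS (- x) = - pS x.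
  by move=> x; apply/rowP => i; rewrite !mxE; case: ifP; rewrite ?oppr0.
have NN : forall y, N (- y) = N y by move=> y; rewrite /N den_opp.
have hN : forall x, h (- x) = - h x by move=> x; rewrite /h pSN NN scalerN.
have ghN : forall v, gh (- v) = - gh v by move=> v; rewrite /gh normrN scalerN.
split.
  apply: continuous_subspaceT => x.
  apply: cont_row_mx; last first.
    apply: cont_entries => i t.
    have -> : (fun y : 'rV[R]_n => Q y i t) = (fun y : 'rV[R]_n => y 0 (enum_val t)).
      by apply/funext => y; rewrite !mxE.
    exact: coord_continuous.
  have [pz|nz] := eqVneq (pS x) 0.
    have Fx : F x = 0 by rewrite /F pz N0 scale0r.
    rewrite /prop_for /continuous_at Fx.
    apply/(@cvgrPdist_lt _ _ _ (nbhs x) _) => eps eps0.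
    have := NpSc x; move/cvgrPdist_lt => /(_ eps eps0).
    apply: filterS => y; rewrite pz N0 sub0r normrN => Hy.
    rewrite sub0r normrN /F normrZ.
    apply: (le_lt_trans (ler_wpM2l (normr_ge0 _) (gh_le1 _))).
    by rewrite mulr1.
  have Nx := Npos _ nz.
  have hc : {for x, continuous h}.
    rewrite /prop_for /continuous_at /h.
    apply: (@cvgZ _ _ _ (nbhs x) _ (fun y => (N (pS y))^-1) pS).
      apply: (@cvgV _ _ (nbhs x) _ (fun y => N (pS y))); first by rewrite gt_eqF.
      exact: NpSc.
    exact: pSc.
  have nearB : \forall y \near x, BS R n mu p S (h y).
    have := NpSc x; move/cvgrPdist_lt => /(_ _ Nx).
    apply: filterS => y Hy; apply: hBS; apply/eqP => H.
    by move: Hy; rewrite H N0 subr0 ger0_norm ?ltW // ltxx.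
  have ghc : {for x, continuous (g \o h)} := comp_within hc nearB (hBS _ nz) gc.
  rewrite /prop_for /continuous_at /F.
  apply: (@cvgZ _ _ _ (nbhs x) _ (fun y => N (pS y)) (fun y => gh (g (h y)))).
    exact: NpSc.
  apply: (@continuous_comp _ _ _ (g \o h) gh x ghc).
  have gv : g (h x) != 0 := gnz _ (hBS _ nz).
  rewrite /prop_for /continuous_at /gh.
  apply: (@cvgZ _ _ _ (nbhs (g (h x))) _ (fun v : 'rV[R]_j => `|v|^-1) id).
    apply: (@cvgV _ _ (nbhs (g (h x))) _ (fun v : 'rV[R]_j => `|v|)).
      by rewrite normr_eq0.
    exact: norm_continuous.
  exact: cvg_id.
split.
  move=> x _; rewrite opp_row_mx; congr row_mx.
    rewrite /F hN pSN NN.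
    have [->|nz] := eqVneq (pS x) 0; first by rewrite N0 !scale0r oppr0.
    by rewrite godd ?ghN ?scalerN //; exact: hBS.
  by apply/rowP => t; rewrite !mxE.
move=> x x0.
apply/negP; rewrite row_mx_eq0 => /andP[/eqP Fx /eqP Qx].
have Hc : forall i, i \notin S -> x 0 i = 0.
  move=> i iS; have iS' : i \in ~: S by rewrite inE.
  have := congr1 (fun M : 'rV[R]_#|~: S| => M 0 (enum_rank_in iS' i)) Qx.
  by rewrite !mxE enum_rankK_in.
have nz : pS x != 0.
  apply/eqP => H; move: x0; rewrite /X0 /= => /eqP; apply; apply/rowP => i; rewrite mxE.
  have [iS|iS] := boolP (i \in S); last exact: Hc.
  by have := congr1 (fun M : 'rV[R]_n => M 0 i) H; rewrite !mxE iS.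
move: Fx; apply/eqP.
rewrite /F scaler_eq0 negb_or gt_eqF ?Npos //= /gh scaler_eq0 negb_or invr_eq0 normr_eq0.
by rewrite andbb; apply: gnz; exact: hBS.
Qed.


Lemma genus_mono (R : realType) (n : nat) (B : set 'rV[R]_n) k k' :
  (k' <= k)%N -> genus_ge B k -> genus_ge B k'.
Proof. by move=> kk g j jk; apply: g; exact: leq_trans jk kk. Qed.

Lemma count_main (R : realType) (n : nat) (e : rel 'I_n)
  (w : 'I_n -> 'I_n -> R) (sg : {ffun 'I_n * 'I_n -> bool})
  (kappa mu : 'I_n -> R) (S : {set 'I_n}) :
  independent e S ->
  (forall i j, e i j -> 0 < w i j) -> (forall i, 0 < mu i) ->
  (#|S| <= num_zero_Lk e w sg kappa mu)%N.
Proof.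
move=> indS w0 mu0.
set m := #|~: S|.
have Hn : (#|S| + m)%N = n by rewrite /m cardsC card_ord.
have aS : (#|S| <= n)%N by apply: (leq_trans (leq_addr m _)); rewrite Hn.
have ltm : forall t : 'I_#|S|, (t + m < n)%N.
  by move=> t; apply: (@leq_trans (#|S| + m)); [rewrite ltn_add2r | rewrite Hn].
pose P k := genus_ge (X0 R n) k.
pose phi (t : 'I_#|S|) : 'I_n :=
  if asbool (P (t.+1 + m)%N) then widen_ord aS t else Ordinal (ltm t).
have phiZ : forall t, phi t \in [set k : 'I_n | Lk e w sg kappa mu k.+1 == 0].
  move=> t; rewrite inE /phi; case: ifPn => /asboolP HP /=.
    apply/eqP; apply: (@Lk_zero2 _ _ _ _ _ _ _ _ S) => // p p0.
    exact: genus_BS.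
  apply/eqP; apply: Lk_zero1; by rewrite -addSn.
have phiI : injective phi.
  move=> t1 t2; rewrite /phi.
  case: ifPn => /asboolP H1; case: ifPn => /asboolP H2 /(congr1 val) /= E.
  - exact: val_inj.
  - exfalso; apply: H2; apply: genus_mono H1; rewrite E addSn ltnS.
    by rewrite leq_add2r leq_addr.
  - exfalso; apply: H1; apply: genus_mono H2; rewrite -E addSn ltnS.
    by rewrite leq_add2r leq_addr.
  - by apply: val_inj; move/eqP: E; rewrite eqn_add2r => /eqP.
rewrite /num_zero_Lk.
have sub : (phi @: 'I_#|S|)%SET \subset [set k : 'I_n | Lk e w sg kappa mu k.+1 == 0].
  apply/fintype.subsetP => _ /imsetP [t _ ->]; exact: phiZ.
by have := subset_leq_card sub; rewrite card_imset // card_ord.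
Qed.

End Helpers.

Theorem theorem6p2 (R : realType) (n : nat) (e : rel 'I_n)
  (w : 'I_n -> 'I_n -> R) (mu kappa : 'I_n -> R) :
  symmetric e -> irreflexive e ->
  (forall i j, w i j = w j i) ->
  (forall i j, e i j -> 0 < w i j) ->
  (forall i, 0 < mu i) ->
  (indep_number e <=
     \big[minn/n]_(sg : {ffun 'I_n * 'I_n -> bool})
        num_zero_Lk e w sg kappa mu)%N.
Proof.
move=> esym eirr wsym w0 mu0.
have [S indS ->] : exists2 S, independent e S & indep_number e = #|S|.
  have [|S iS Hm] := @eq_bigmax_cond _ [pred S : {set 'I_n} | independent e S] (fun S => #|S|).
    apply/card_gt0P; exists (@finset.set0 _); rewrite inE /=.
    by apply/forallP => i; apply/implyP; rewrite inE.
  by exists S => //; rewrite -Hm /indep_number.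
have aS : (#|S| <= n)%N by apply: (leq_trans (max_card _)); rewrite card_ord.
elim/big_ind: _ => //.
  by move=> a b ha hb; rewrite leq_min ha hb.
move=> sg _; exact: count_main.
Qed.
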